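(* Let $L$ be a finite lattice and $\varphi\in M_1(L)$. Then $\lambda(\varphi;a,b)=B_\varphi(\langle a,b\rangle^* )$ for every pair $\{a,b\}$ of elements of $L$.
   Context: $L$ is a finite lattice with join $\vee$ and meet $\wedge$. $M_1(L)$ is the set of nonnegative monotone real functions on $L$. A path from $a$ to $b$ is a sequence $H=(h_0,\dots,h_m)$ of distinct elements of $L$ with $h_0=a$, $h_m=b$ ($m\ge 0$); $\varphi(H)=\sum_{i=0}^m\varphi(h_i)-\sum_{i=1}^m\varphi(h_{i-1}\vee h_i)$, and $\lambda(\varphi;a,b)=\max\{\varphi(H):H\text{ a path from }a\text{ to }b\}$. For $A\subseteq L$, $\langle A\rangle^*=\{x:x\ge a\text{ for some }a\in A\}$; $\langle a,b\rangle^*=\langle\{a,b\}\rangle^*$, $\langle x\rangle^*=\langle\{x\}\rangle^*$. $\mathcal L$ is the set of nonempty up-sets of $L$ ordered by $U\preceq V$ iff $U\supseteq V$ (meet = union). $M_\infty(\mathcal L)$ is the set of nonnegative completely monotone functions on $(\mathcal L,\preceq)$ (all iterated differences $\nabla_U\Phi(W)=\Phi(W)-\Phi(W\wedge U)$ nonnegative). $B_\varphi(U)=\min\{\Phi(U):\Phi\in M_\infty(\mathcal L),\ \Phi(\langle x\rangle^* )=\varphi(x)\ \forall x\in L\}$. *)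

(* Defs.v *)
From HB Require Import structures.
From mathcomp Require Import all_boot all_order all_algebra.
From mathcomp Require Import reals.
Set Implicit Arguments. Unset Strict Implicit. Unset Printing Implicit Defensive.
Import Order.TTheory GRing.Theory Num.Theory.
Local Open Scope ring_scope.

Section Defs.
Variables (d : Order.disp_t) (L : finLatticeType d) (R : realType).

Definition in_M1 (phi : L -> R) : Prop :=
  (forall x, 0 <= phi x) /\ (forall x y, (x <= y)%O -> phi x <= phi y).

Definition is_path (a b : L) (H : seq L) : Prop :=
  [/\ uniq H, head a H = a, last a H = b & H != [::]].

Definition path_value (phi : L -> R) (H : seq L) : R :=
  \sum_(h <- H) phi h
  - \sum_(p <- zip H (behead H)) phi (Order.join p.1 p.2).

Definition is_lambda (phi : L -> R) (a b : L) (v : R) : Prop :=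
  (exists2 H, is_path a b H & path_value phi H = v) /\
  (forall H, is_path a b H -> path_value phi H <= v).

Definition is_upset (U : {set L}) : bool :=
  (U != set0) && [forall x, forall y, (x \in U) && (x <= y)%O ==> (y \in U)].

Definition upcl (A : {set L}) : {set L} :=
  [set y | [exists x, (x \in A) && (x <= y)%O]].

(* Iterated differences on (\mathcal L, \preceq), where the meet is the union:
   nabla_U Phi(W) = Phi(W) - Phi(W \/ U);
   iter_nabla [:: U1; ...; Uk] Phi W = nabla_{U1} ... nabla_{Uk} Phi (W). *)
Fixpoint iter_nabla (Us : seq {set L}) (Phi : {set L} -> R) (W : {set L}) : R :=
  match Us with
  | [::] => Phi W
  | U :: Us' => iter_nabla Us' Phi W - iter_nabla Us' Phi (W :|: U)
  end.

(* M_infty(\mathcal L): nonnegative completely monotone functions on the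
   nonempty up-sets (values of Phi outside \mathcal L are irrelevant). *)
Definition completely_monotone (Phi : {set L} -> R) : Prop :=
  forall (Us : seq {set L}) (W : {set L}),
    all is_upset Us -> is_upset W -> 0 <= iter_nabla Us Phi W.

Definition extends (phi : L -> R) (Phi : {set L} -> R) : Prop :=
  completely_monotone Phi /\ forall x, Phi (upcl [set x]) = phi x.

Definition is_Bphi (phi : L -> R) (U : {set L}) (v : R) : Prop :=
  (exists2 Phi, extends phi Phi & Phi U = v) /\
  (forall Phi, extends phi Phi -> v <= Phi U).

End Defs.

(* Main.v *)
Require Import Defs.
From HB Require Import structures.
From mathcomp Require Import all_boot all_order all_algebra.
From mathcomp Require Import reals.
From mathcomp Require Import lra.
From Stdlib Require Import ClassicalEpsilon.
Import Order.TTheory GRing.Theory Num.Theory.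
Local Open Scope ring_scope.

Section Aux.
Variables (d : Order.disp_t) (L : finLatticeType d) (R : realType).
Implicit Types (phi f : L -> R) (W U : {set L}).

Lemma in_upcl1 (x z : L) : (z \in upcl [set x]) = (x <= z)%O.
Proof.
rewrite inE; apply/existsP/idP => [[y /andP[]]|h]; first by rewrite inE => /eqP->.
by exists x; rewrite inE eqxx.
Qed.

Lemma upcl_upset (x : L) : is_upset (upcl [set x]).
Proof.
apply/andP; split.
  by apply/set0Pn; exists x; rewrite in_upcl1.
apply/forallP => y; apply/forallP => z; apply/implyP => /andP[].
rewrite !in_upcl1 => h1 h2; exact: le_trans h1 h2.
Qed.

Lemma upsetU W U : is_upset W -> is_upset U -> is_upset (W :|: U).
Proof.
move=> /andP[/set0Pn[w hw] /forallP hW] /andP[_ /forallP hU].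
apply/andP; split; first by apply/set0Pn; exists w; rewrite inE hw.
apply/forallP => y; apply/forallP => z; apply/implyP => /andP[].
rewrite !inE => /orP[hy|hy] hyz.
  by move: (hW y) => /forallP/(_ z)/implyP->; rewrite ?hy ?hyz.
by move: (hU y) => /forallP/(_ z)/implyP->; rewrite ?hy ?hyz ?orbT.
Qed.

Lemma upset_n0 W : is_upset W -> W != set0.
Proof. by case/andP. Qed.

Lemma upcl2 (a b : L) : upcl [set a; b] = upcl [set a] :|: upcl [set b].
Proof.
apply/setP => z; rewrite in_setU !in_upcl1 inE.
apply/existsP/orP => [[y /andP[]]|[h|h]].
- by rewrite !inE => /orP[]/eqP-> ->; [left|right].
- by exists a; rewrite !inE eqxx h.
- by exists b; rewrite !inE eqxx h orbT.
Qed.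

Lemma pv1 phi (h : L) : path_value phi [:: h] = phi h.
Proof. by rewrite /path_value /= big_cons big_nil big_nil addr0 subr0. Qed.

Lemma pv_cons phi (x y : L) s :
  path_value phi [:: x, y & s] = phi x - phi (Order.join x y) + path_value phi (y :: s).
Proof.
rewrite /path_value /= !big_cons /=.
set A := \sum_(h <- s) phi h.
set B := \sum_(p <- zip (y :: s) s) phi (Order.join p.1 p.2).
lra.
Qed.

Lemma pv_cat phi s (y : L) t :
  path_value phi (s ++ y :: t) = path_value phi (rcons s y) + path_value phi (y :: t) - phi y.
Proof.
elim: s => [|z s IH] /=; first by rewrite pv1; lra.
case: s IH => [|w s] IH /=.
  by rewrite pv_cons pv_cons pv1; lra.
rewrite pv_cons IH /= pv_cons; lra.
Qed.

Lemma pv_rcons phi (h : L) t y :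
  path_value phi (rcons (h :: t) y) = path_value phi (h :: t) + phi y - phi (Order.join (last h t) y).
Proof.
elim: t h => [|w t IH] h /=; first by rewrite pv_cons pv1 pv1; lra.
by rewrite pv_cons IH pv_cons; lra.
Qed.


Definition mfold f (w : L) (s : seq L) : R := foldr (fun z acc => Num.min (f z) acc) (f w) s.

Lemma mfoldP f w s :
  (forall z, z \in w :: s -> mfold f w s <= f z) /\ (exists2 z, z \in w :: s & mfold f w s = f z).
Proof.
elim: s => [|y s [IH1 [z hz IH2]]] /=.
  by split; [move=> z; rewrite inE => /eqP->|exists w; rewrite ?inE].
split.
  move=> t; rewrite !inE => /orP[/eqP->|/orP[/eqP->|hz']].
  - rewrite ge_min; apply/orP; right; apply: IH1; exact: mem_head.
  - by rewrite ge_min lexx.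
  - rewrite ge_min; apply/orP; right; apply: IH1; by rewrite inE hz' orbT.
case: (leP (f y) (mfold f w s)) => h.
  by exists y; rewrite ?inE ?eqxx ?orbT // min_l.
exists z; first by move: hz; rewrite !inE => /orP[]->; rewrite ?orbT.
by [].
Qed.

Definition Mn f (W : {set L}) : R :=
  if enum W is w :: s then mfold f w s else 0.

Lemma MnP f W : W != set0 ->
  (forall z, z \in W -> Mn f W <= f z) /\ (exists2 z, z \in W & Mn f W = f z).
Proof.
move=> /set0Pn[x hx]; rewrite /Mn.
have : x \in enum W by rewrite mem_enum.
case E: (enum W) => [|w s] //= _.
have [h1 [z hz h2]] := mfoldP f w s.
split; first by move=> z' hz'; apply: h1; rewrite -E mem_enum.
by exists z; rewrite // -mem_enum E.
Qed.

Lemma MnU f W U : W != set0 -> U != set0 -> Mn f (W :|: U) = Num.min (Mn f W) (Mn f U).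
Proof.
move=> hW hU.
have hWU : W :|: U != set0.
  by case/set0Pn: hW => x hx; apply/set0Pn; exists x; rewrite inE hx.
have [a1 [z1 hz1 e1]] := MnP f W hW.
have [a2 [z2 hz2 e2]] := MnP f U hU.
have [a3 [z3 hz3 e3]] := MnP f _ hWU.
apply/le_anti/andP; split.
  rewrite le_min; apply/andP; split.
    by rewrite e1; apply: a3; rewrite inE hz1.
  by rewrite e2; apply: a3; rewrite inE hz2 orbT.
rewrite e3; move: hz3; rewrite inE => /orP[h|h]; rewrite ge_min.
  by rewrite a1.
by rewrite a2 ?orbT.
Qed.

Lemma Mn_upcl f (x : L) : (forall y z, (y <= z)%O -> f y <= f z) ->
  Mn f (upcl [set x]) = f x.
Proof.
move=> hf.
have hn : upcl [set x] != set0 by apply/set0Pn; exists x; rewrite in_upcl1.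
have [a1 [z hz e]] := MnP f _ hn.
apply/le_anti/andP; split; first by apply: a1; rewrite in_upcl1.
by rewrite e; apply: hf; rewrite -in_upcl1.
Qed.

Lemma Mn_ge0 f W : (forall x, 0 <= f x) -> 0 <= Mn f W.
Proof.
move=> hf; case: (boolP (W == set0)) => [/eqP->|hW].
  by rewrite /Mn; case: (enum _) => [|w s] //; have [_ [z _ ->]] := mfoldP f w s.
by have [_ [z _ ->]] := MnP f W hW.
Qed.

Definition mxs (Phi : {set L} -> R) (Us : seq {set L}) : R :=
  foldr (fun U acc => Num.max (Phi U) acc) 0 Us.

Lemma arith (c u m : R) : 0 <= m ->
  Num.max 0 (c - m) - Num.max 0 (Num.min c u - m) = Num.max 0 (c - Num.max u m).
Proof.
move=> hm.
have mx0 : forall x : R, Num.max 0 x = if 0 <= x then x else 0 by move=> x; rewrite maxEle.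
rewrite !mx0 (maxEle u m) (minEle c u).
case: (leP c u) => h1; case: (leP u m) => h2;
  case: (leP 0 (c - m)) => h3; try case: (leP 0 (c - u)) => h4;
  try case: (leP 0 (u - m)) => h5; lra.
Qed.

Lemma cm_min (Phi : {set L} -> R) :
  (forall W, is_upset W -> 0 <= Phi W) ->
  (forall W U, is_upset W -> is_upset U -> Phi (W :|: U) = Num.min (Phi W) (Phi U)) ->
  completely_monotone Phi.
Proof.
move=> h0 hU.
have key : forall (Us : seq {set L}) W, all (is_upset (L:=L)) Us -> is_upset W ->
    iter_nabla Us Phi W = Num.max 0 (Phi W - mxs Phi Us) /\ 0 <= mxs Phi Us.
  elim=> [|U Us IH] W /=.
    by move=> _ hW; rewrite subr0 max_r ?h0 ?lexx.
  move=> /andP[hu hus] hW.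
  have [e1 hm] := IH W hus hW.
  have [e2 _] := IH (W :|: U) hus (upsetU _ _ hW hu).
  rewrite e1 e2 hU // arith //; split => //.
  by rewrite le_max hm orbT.
move=> Us W hUs hW; have [-> _] := key Us W hUs hW.
by rewrite le_max lexx.
Qed.

Lemma ext_Mn f : (forall x, 0 <= f x) -> (forall y z, (y <= z)%O -> f y <= f z) ->
  extends f (Mn f).
Proof.
move=> h0 hm; split; last by move=> x; exact: Mn_upcl.
apply: cm_min => [W _|W U hW hU]; first exact: Mn_ge0.
by apply: MnU; apply: upset_n0.
Qed.

Lemma iter_add (P1 P2 : {set L} -> R) Us W :
  iter_nabla Us (fun X => P1 X + P2 X) W = iter_nabla Us P1 W + iter_nabla Us P2 W.
Proof.
elim: Us W => [|U Us IH] W //=; rewrite !IH; lra.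
Qed.


Lemma upper phi Phi : extends phi Phi -> forall t (h : L),
  path_value phi (h :: t) <= Phi (upcl [set h] :|: upcl [set last h t]).
Proof.
case=> hcm hext.
have n1 : forall U W, is_upset U -> is_upset W -> Phi (W :|: U) <= Phi W.
  move=> U W hU hW; have := hcm [:: U] W; rewrite /= hU hW subr_ge0; exact.
have n2 : forall U1 U2 W, is_upset U1 -> is_upset U2 -> is_upset W ->
    0 <= Phi W - Phi (W :|: U2) - (Phi (W :|: U1) - Phi (W :|: U1 :|: U2)).
  move=> U1 U2 W h1 h2 hW; have := hcm [:: U1; U2] W; rewrite /= h1 h2 hW; exact.
elim=> [|h1 t IH] h.
  by rewrite pv1 /= setUid hext.
rewrite pv_cons /=.
set Rr := upcl [set h]; set Q := upcl [set h1]; set P := upcl [set last h1 t].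
set J := upcl [set Order.join h h1].
have IH' := IH h1.
have JR : J :|: Rr = Rr.
  apply/setUidPr/subsetP => z; rewrite !in_upcl1 => hz; exact: le_trans (leUl h h1) hz.
have JQ : J :|: Q = Q.
  apply/setUidPr/subsetP => z; rewrite !in_upcl1 => hz; exact: le_trans (leUr h1 h) hz.
have e3 : J :|: P :|: Q = Q :|: P by rewrite -setUA [P :|: Q]setUC setUA JQ.
have uR : is_upset Rr by apply: upcl_upset.
have uQ : is_upset Q by apply: upcl_upset.
have uP : is_upset P by apply: upcl_upset.
have uJ : is_upset J by apply: upcl_upset.
have A1 := n2 Rr P J uR uP uJ.
have A2 := n1 Q (J :|: P) uQ (upsetU _ _ uJ uP).
rewrite JR e3 in A1 A2.
have hJ : Phi J = phi (Order.join h h1) by apply: hext.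
have hR : Phi Rr = phi h by apply: hext.
rewrite hJ hR in A1.
lra.
Qed.

Fixpoint allseqs (n : nat) : seq (seq L) :=
  if n is n'.+1 then [::] :: [seq x :: s | x <- enum L, s <- allseqs n'] else [:: [::]].

Lemma allseqsP n s : (size s <= n)%N -> s \in allseqs n.
Proof.
elim: n s => [|n IH] [|x s] //= hs; rewrite ?mem_head //.
rewrite inE; apply/orP; right; apply: allpairs_f; [by rewrite mem_enum | exact: IH].
Qed.

Lemma seq_max (T : eqType) (F : T -> R) (s : seq T) : s != [::] ->
  exists2 x, x \in s & forall y, y \in s -> F y <= F x.
Proof.
elim: s => [|x s IH] // _.
case: s IH => [|y s] IH.
  by exists x; rewrite ?mem_head // => z; rewrite inE => /eqP->.
have [m hm Hm] := IH isT.
case: (leP (F x) (F m)) => h.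
  exists m; first by rewrite inE hm orbT.
  by move=> z; rewrite inE => /orP[/eqP->|/Hm].
exists x; first exact: mem_head.
move=> z; rewrite inE => /orP[/eqP->|/Hm hz]; first exact: lexx.
exact: le_trans hz (ltW h).
Qed.

Lemma lam_ex phi (a b : L) : exists v, is_lambda phi a b v.
Proof.
pose pb := fun H : seq L => [&& uniq H, head a H == a, last a H == b & H != [::]].
have pbP : forall H, is_path a b H <-> pb H.
  move=> H; split; first by case=> h1 h2 h3 h4; rewrite /pb h1 h2 h3 h4 !eqxx.
  by case/and4P => h1 /eqP h2 /eqP h3 h4.
pose S := [seq H <- allseqs #|L| | pb H].
have mS : forall H, is_path a b H -> H \in S.
  move=> H hp; have := hp; move/pbP => hb; rewrite mem_filter hb /=.
  apply: allseqsP; case: hp => hu _ _ _; rewrite cardE.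
  by apply: uniq_leq_size => // z _; rewrite mem_enum.
have nS : S != [::].
  case: (eqVneq a b) => [e|hab].
    have : [:: a] \in S by apply: mS; split.
    by move=> h; apply/eqP => hS; rewrite hS in h.
  have : [:: a; b] \in S by apply: mS; split => //=; rewrite inE hab.
  by move=> h; apply/eqP => hS; rewrite hS in h.
have [H hS hmax] := seq_max _ (path_value phi) _ nS.
exists (path_value phi H); split.
  by exists H => //; apply/pbP; move: hS; rewrite mem_filter => /andP[].
by move=> H' /mS; apply: hmax.
Qed.

Section Main.
Variables (phi : L -> R) (hphi : in_M1 phi) (a : L).

Let h0 := hphi.1.
Let hm := hphi.2.
Let gex x : exists v, is_lambda phi a x v := lam_ex phi a x.
Let g x : R := proj1_sig (constructive_indefinite_description _ (gex x)).
Let hg x : is_lambda phi a x (g x) := proj2_sig (constructive_indefinite_description _ (gex x)).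
Let ext0 : extends phi (Mn phi) := ext_Mn phi h0 hm.

Lemma Mn_pair (f : L -> R) x y : (forall u v, (u <= v)%O -> f u <= f v) ->
  Mn f (upcl [set x] :|: upcl [set y]) = Num.min (f x) (f y).
Proof.
move=> hf; rewrite MnU ?upset_n0 ?upcl_upset //.
by rewrite !Mn_upcl.
Qed.

Lemma G_le x : g x <= Num.min (phi a) (phi x).
Proof.
have [[H hp e] _] := hg x; case: hp => _ hh hl hn.
case: H hh hl hn e => [|h t] //= -> hl _ <-.
by rewrite -(Mn_pair _ _ _ hm) -hl; apply: upper.
Qed.

Lemma G_a : g a = phi a.
Proof.
apply/le_anti/andP; split.
  by apply: le_trans (G_le a) _; rewrite ge_min lexx.
have [_ hb] := hg a; rewrite -(pv1 phi a); apply: hb; split => //.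
Qed.

Lemma G2 x y : g x + phi y - phi (Order.join x y) <= g y.
Proof.
have [[H hp e] _] := hg x; have [_ hb] := hg y.
case: hp => hu hh hl hn.
case: (boolP (y \in H)) => hy.
- move: hu hh hl e; case/splitPr: hy => H1 H2 hu hh hl e.
  have hP : is_path a y (rcons H1 y).
    split.
    + by move: hu; rewrite -cat_rcons cat_uniq => /andP[].
    + by case: H1 hh {hu hl e}.
    + by rewrite last_rcons.
    + by case: H1 {hu hh hl e}.
  have := hb _ hP.
  have hv : path_value phi (y :: H2) <= phi (Order.join x y).
    rewrite last_cat /= in hl.
    apply: le_trans (upper phi (Mn phi) ext0 H2 y) _.
    rewrite Mn_pair // hl ge_min; apply/orP; right; apply: hm; exact: leUl.
  rewrite pv_cat in e; lra.
- case: H hu hh hl hn e hy => [|h t] // hu /= hh hl _ e hy; subst h.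
  have hP : is_path a y (rcons (a :: t) y).
    split.
    + by rewrite rcons_uniq hy hu.
    + by [].
    + by rewrite last_rcons.
    + by [].
  have := hb _ hP; rewrite pv_rcons hl e; lra.
Qed.

Lemma G_mono y z : (y <= z)%O -> g y <= g z.
Proof. by move=> h; have := G2 y z; rewrite join_r //; lra. Qed.

Lemma H_mono y z : (y <= z)%O -> phi y - g y <= phi z - g z.
Proof. by move=> h; have := G2 z y; rewrite join_l //; lra. Qed.

Lemma G_ge0 x : 0 <= g x.
Proof.
have := G2 a (Order.meet a x); rewrite join_l ?leIl // G_a.
have := G2 (Order.meet a x) x; rewrite join_r ?leIr //.
have := h0 (Order.meet a x); lra.
Qed.

Lemma H_ge0 x : 0 <= phi x - g x.
Proof. by have := G_le x; rewrite le_min => /andP[_]; rewrite subr_ge0. Qed.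

Lemma main_res (b : L) : is_lambda phi a b (g b) /\ is_Bphi phi (upcl [set a; b]) (g b).
Proof.
split; first exact: hg.
have eg := ext_Mn g G_ge0 G_mono.
have eh := ext_Mn (fun x => phi x - g x) H_ge0 H_mono.
split.
  exists (fun X => Mn g X + Mn (fun x => phi x - g x) X).
    split.
      move=> Us W hUs hW; rewrite iter_add; apply: addr_ge0.
        by apply: eg.1.
      by apply: eh.1.
    by move=> x; rewrite eg.2 eh.2; lra.
  rewrite upcl2 (Mn_pair g) ?(Mn_pair (fun x => phi x - g x)); last exact: G_mono; last by move=> u v; exact: H_mono.
  rewrite G_a subrr.
  have := G_le b; rewrite le_min => /andP[hb1 hb2].
  rewrite min_r // min_l ?subr_ge0 //; lra.
move=> Phi hPhi.
have [[H hp e] _] := hg b; case: hp => _ hh hl hn.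
case: H hh hl hn e => [|h t] //= -> hl _ <-.
by rewrite upcl2 -hl; apply: upper.
Qed.

End Main.
End Aux.

Theorem proposition3p12 (d : Order.disp_t) (L : finLatticeType d) (R : realType)
  (phi : L -> R) (hphi : in_M1 phi) (a b : L) :
  exists v : R, is_lambda phi a b v /\ is_Bphi phi (upcl [set a; b]) v.
Proof.
have := @main_res d L R phi hphi a b; move=> H; eexists; exact: H.
Qed.
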